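(* Let $\mathsf{X}\subset\mathbb{R}^p$, $\mathsf{Y}\subset\mathbb{R}^q$, let $\tilde s(x\mid\gamma)$ and $\tilde h(\gamma\mid x)$ be conditional pdfs on $\mathsf{X}$ and $\mathsf{Y}$ respectively, and let $\{\Psi_m\}$ be the Markov chain on $\mathsf{X}$ with transition density $k(x,x')=\int_{\mathsf{Y}}\tilde s(x'\mid\gamma)\tilde h(\gamma\mid x)d\gamma$ (transition function $K$, invariant probability $\Pi$) and $\{\tilde\Psi_m\}$ the Markov chain on $\mathsf{Y}$ with transition density $\tilde k(\gamma,\gamma')=\int_{\mathsf{X}}\tilde h(\gamma'\mid x)\tilde s(x\mid\gamma)dx$ (transition function $\tilde K$, invariant probability $\tilde\Pi$), both Harris ergodic. Suppose there is $R:\mathsf{Y}\times\mathbb{Z}_+\to(0,\infty)$ such that for every initial distribution $\tilde\nu$ of $\tilde\Psi_0$ and all $m\ge0$, $\|\tilde\nu\tilde K^m-\tilde\Pi\|_{TV}\le\mathbb{E}_{\tilde\nu}R(\tilde\Psi_0,m)$. Then for every initial distribution $\nu$ of $\Psi_0$ and all $m\ge1$, $\|\nu K^m-\Pi\|_{TV}\le\mathbb{E}_\nu\Big(\int_{\mathsf{Y}}R(\gamma,m-1)\tilde h(\gamma\mid\Psi_0)d\gamma\Big)$.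
   Context: $\nu K^m(\cdot)=\int K^m(x,\cdot)\nu(dx)$; $\|\cdot\|_{TV}$ is the total variation norm, taken as the $L^1$ distance between densities (the same convention on both sides). *)

(* Defs.v *)
From HB Require Import structures.
From mathcomp Require Import all_boot all_order all_algebra.
From mathcomp Require Import all_classical all_reals all_analysis.
Set Implicit Arguments. Unset Strict Implicit. Unset Printing Implicit Defensive.
Import Order.TTheory GRing.Theory Num.Theory.
Local Open Scope classical_set_scope.
Local Open Scope ring_scope.
Local Open Scope ereal_scope.

Section MarkovDefs.
Context {d : measure_display} {T : measurableType d} {R : realType}.
Variable mu : {measure set T -> \bar R}.
Variable k : T -> T -> \bar R.

Definition kop (f : T -> \bar R) (x : T) : \bar R :=
  \int[mu]_y (k x y * f y).

Definition kpow (n : nat) (x : T) (A : set T) : \bar R :=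
  iter n kop (fun y => (\1_A y)%:E) x.

Definition mpow (nu : {measure set T -> \bar R}) (n : nat) (A : set T) : \bar R :=
  \int[nu]_x kpow n x A.

Definition tvd (m1 m2 : set T -> \bar R) : \bar R :=
  ereal_sup [set r | exists (n : nat) (A : 'I_n -> set T),
     [/\ forall i, measurable (A i), trivIset setT A,
         \bigcup_(i in setT) A i = setT &
         r = \sum_(i < n) `|m1 (A i) - m2 (A i)| ] ].

Fixpoint avoid (A : set T) (n : nat) : T -> \bar R :=
  match n with
  | 0 => fun _ => 1
  | n'.+1 => kop (fun y => (\1_(~` A) y)%:E * avoid A n' y)
  end.

Definition hitL (A : set T) (x : T) : \bar R :=
  ereal_sup [set 1 - avoid A n x | n in [set: nat]].

Definition hitQ (A : set T) (x : T) : \bar R :=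
  ereal_inf [set iter N kop (hitL A) x | N in [set: nat]].

Definition kinvariant (P : {measure set T -> \bar R}) : Prop :=
  forall A, measurable A -> mpow P 1 A = P A.

Definition irr_measure (phi : {measure set T -> \bar R}) : Prop :=
  0 < phi setT /\ forall A, measurable A -> 0 < phi A -> forall x, 0 < hitL A x.

Definition max_irr_measure (psi : {measure set T -> \bar R}) : Prop :=
  irr_measure psi /\ forall phi, irr_measure phi ->
    forall A, measurable A -> psi A = 0 -> phi A = 0.

Definition psi_irreducible : Prop := exists psi, max_irr_measure psi.

Definition aperiodic : Prop :=
  forall psi, max_irr_measure psi -> forall (n : nat), (2 <= n)%N ->
  ~ exists D : nat -> set T,
     [/\ forall i, measurable (D i),
         forall i j, (i < n)%N -> (j < n)%N -> i <> j -> D i `&` D j = set0,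
         forall i x, (i < n)%N -> D i x -> kpow 1 x (D (i.+1 %% n)%N) = 1 &
         psi (~` \bigcup_(i in `I_n) D i) = 0].

Definition harris_recurrent : Prop :=
  exists psi, max_irr_measure psi /\
    forall A, measurable A -> 0 < psi A -> forall x, hitQ A x = 1.

Definition harris_ergodic : Prop :=
  [/\ psi_irreducible, aperiodic & harris_recurrent].

End MarkovDefs.

(* Main.v *)
Require Import Defs.
From HB Require Import structures.
From mathcomp Require Import all_boot all_order all_algebra.
From mathcomp Require Import all_classical all_reals all_analysis.
From mathcomp Require Import measurable_realfun.
Import Order.TTheory GRing.Theory Num.Theory.
Local Open Scope classical_set_scope.
Local Open Scope ring_scope.
Local Open Scope ereal_scope.
Set Implicit Arguments. Unset Strict Implicit.
Section gen.
Context {R : realType}.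

Lemma GA d1 d2 (T1 : measurableType d1) (T2 : measurableType d2)
  (m1 : {sigma_finite_measure set T1 -> \bar R}) (m2 : {sigma_finite_measure set T2 -> \bar R})
  (k : T1 -> T2 -> \bar R) (mk : measurable_fun setT (fun z : T1 * T2 => k z.1 z.2))
  (k0 : forall x y, 0 <= k x y) (f : T2 -> \bar R) (mf : measurable_fun setT f)
  (f0 : forall y, 0 <= f y) :
  \int[m1]_x \int[m2]_y (k x y * f y) = \int[m2]_y ((\int[m1]_x k x y) * f y).
Proof.
have mF : measurable_fun [set: T1 * T2] ((fun z : T1 * T2 => k z.1 z.2 * f z.2) : _ -> \bar R).
  by apply: emeasurable_funM => //; exact: measurableT_comp mf measurable_snd.
have F0 : forall z : T1 * T2, 0 <= k z.1 z.2 * f z.2 by move=> z; exact: mule_ge0.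
have := fubini_tonelli _ mF F0; rewrite /= => ->.
apply: eq_integral => y _; rewrite ge0_integralZr //.
exact: measurableT_comp mk (pair2_measurable y).
Qed.

Lemma meas_intF d1 d2 (T1 : measurableType d1) (T2 : measurableType d2)
  (m2 : {sigma_finite_measure set T2 -> \bar R})
  (k : T1 -> T2 -> \bar R) (mk : measurable_fun setT (fun z : T1 * T2 => k z.1 z.2))
  (k0 : forall x y, 0 <= k x y) :
  measurable_fun setT (fun x => \int[m2]_y k x y).
Proof. exact: (measurable_fun_fubini_tonelli_F (fun z : T1 * T2 => k z.1 z.2)). Qed.

Lemma meas_intG d1 d2 (T1 : measurableType d1) (T2 : measurableType d2)
  (m1 : {sigma_finite_measure set T1 -> \bar R})
  (k : T1 -> T2 -> \bar R) (mk : measurable_fun setT (fun z : T1 * T2 => k z.1 z.2))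
  (k0 : forall x y, 0 <= k x y) :
  measurable_fun setT (fun y => \int[m1]_x k x y).
Proof. exact: (measurable_fun_fubini_tonelli_G (fun z : T1 * T2 => k z.1 z.2)). Qed.

End gen.
Arguments GA {R d1 d2 T1 T2} m1 m2 k.
Arguments meas_intF {R d1 d2 T1 T2} m2 k.
Arguments meas_intG {R d1 d2 T1 T2} m1 k.

Section gen2.
Context {R : realType}.

Lemma DL d (T : measurableType d) (nu : {finite_measure set T -> \bar R})
  (mu : {sigma_finite_measure set T -> \bar R})
  (g : T -> \bar R) (mg : measurable_fun setT g) (g0 : forall x, 0 <= g x)
  (hg : forall A, measurable A -> nu A = \int[mu]_(x in A) g x)
  (f : T -> \bar R) (mf : measurable_fun setT f) (f0 : forall x, 0 <= f x) :
  \int[nu]_x f x = \int[mu]_x (f x * g x).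
Proof.
have numu : nu `<< mu.
  apply/null_content_dominatesP => A mA muA0; rewrite hg// null_set_integral//.
  exact: measurable_funS mg.
rewrite -(Radon_Nikodym_SigmaFinite.change_of_variables numu f0 measurableT mf).
have mRN := measurable_int _ (Radon_Nikodym_SigmaFinite.f_integrable numu).
apply: ae_eq_integral => //.
- exact: emeasurable_funM.
- exact: emeasurable_funM.
apply: ae_eqe_mul2l.
apply: integral_ae_eq => //.
- exact: Radon_Nikodym_SigmaFinite.f_integrable.
- move=> E _ mE; rewrite -Radon_Nikodym_SigmaFinite.f_integral//.
  by rewrite hg.
Qed.

Lemma le_int_eq d (T : measurableType d) (mu : {measure set T -> \bar R})
  (E : set T) (mE : measurable E)
  (f g : T -> \bar R) (mf : measurable_fun E f) (mg : measurable_fun E g)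
  (f0 : forall x, E x -> 0 <= f x) (fg : forall x, E x -> f x <= g x)
  (fin : \int[mu]_(x in E) f x \is a fin_num)
  (eq : \int[mu]_(x in E) f x = \int[mu]_(x in E) g x) :
  mu.-negligible (E `&` [set x | f x < g x]).
Proof.
pose w x := g x - (fine (f x))%:E.
have w0 x : E x -> 0 <= w x.
  move=> Ex; have := fg x Ex; have := f0 x Ex; rewrite /w.
  case: (f x) => [r| |] /=.
  - by move=> _ H; rewrite EFinN sube_ge0.
  - by move=> _; rewrite leye_eq => /eqP ->; rewrite oppr0 adde0 leey.
  - by rewrite leeNy_eq.
have fw x : E x -> g x = f x + w x.
  move=> Ex; have := fg x Ex; have := f0 x Ex; rewrite /w.
  case: (f x) => [r| |] /=.
  - by move=> _ _; rewrite EFinN addeC subeK.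
  - by move=> _; rewrite leye_eq => /eqP ->; rewrite oppr0 adde0.
  - by rewrite leeNy_eq.
have mw : measurable_fun E w.
  apply: emeasurable_funB => //; apply/measurable_EFinP.
  exact: measurableT_comp (fine_measurable _) mf.
have H : \int[mu]_(x in E) g x = \int[mu]_(x in E) f x + \int[mu]_(x in E) w x.
  rewrite -ge0_integralD//; apply: eq_integral => x /[!inE] Ex; exact: fw.
have iw : \int[mu]_(x in E) w x = 0.
  move: H; rewrite -eq => /esym.
  move/(congr1 (fun z => z - \int[mu]_(x in E) f x)).
  by rewrite addeC addeK ?subee.
have /(ae_eq_integral_abs mu mE mw).1 : \int[mu]_(x in E) `|w x| = 0.
  rewrite -iw; apply: eq_integral => x /[!inE] Ex; rewrite gee0_abs//; exact: w0.
move=> [N [mN N0 sN]]; exists N; split => // x [Ex /= fgx]; apply: sN => /= H0.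
have := H0 Ex; rewrite /w /cst; move: fgx.
have := f0 x Ex; case: (f x) => [r| |] //= _.
- case: (g x) => [t| |] //= rt; rewrite -EFinD => Ht; have tr : t = r by case: Ht => /eqP; rewrite subr_eq0 => /eqP. by move: rt; rewrite tr ltxx.
- by rewrite ltNge leey.
Qed.

End gen2.
Arguments DL {R d T} nu mu g.
Arguments le_int_eq {R d T} mu {E}.

Definition dmeas {R : realType} d (T : measurableType d) (mu : {measure set T -> \bar R})
  (g : T -> \bar R) (mg : measurable_fun setT g) (g0 : forall x, 0 <= g x)
  (g1 : \int[mu]_x g x = 1) : set T -> \bar R :=
  fun A => \int[mu]_(x in A) g x.
Arguments dmeas {R d T mu g}.

Section dmeas_sec.
Context {R : realType} d (T : measurableType d) (mu : {measure set T -> \bar R})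
  (g : T -> \bar R) (mg : measurable_fun setT g) (g0 : forall x, 0 <= g x)
  (g1 : \int[mu]_x g x = 1).

Let D := dmeas mg g0 g1.

Let D0 : D set0 = 0.
Proof. by rewrite /D /dmeas integral_set0. Qed.

Let D_ge0 A : 0 <= D A.
Proof. by rewrite /D /dmeas integral_ge0. Qed.

Let D_sa : semi_sigma_additive D.
Proof.
move=> /= F mF tF mUF; rewrite /D /dmeas ge0_integral_bigcup//=.
- apply: is_cvg_ereal_nneg_natsum_cond => n _ _.
  exact: integral_ge0.
- exact: measurable_funS mg.
Qed.

HB.instance Definition _ := isMeasure.Build _ _ _ (dmeas mg g0 g1) D0 D_ge0 D_sa.

Let DT : dmeas mg g0 g1 setT = 1.
Proof. by rewrite /dmeas. Qed.

HB.instance Definition _ := @Measure_isProbability.Build _ _ R (dmeas mg g0 g1) DT.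

End dmeas_sec.

Lemma dmeasE {R : realType} d (T : measurableType d) (mu : {measure set T -> \bar R})
  (g : T -> \bar R) (mg : measurable_fun setT g) (g0 : forall x, 0 <= g x)
  (g1 : \int[mu]_x g x = 1) (A : set T) : dmeas mg g0 g1 A = \int[mu]_(x in A) g x.
Proof. by []. Qed.

Definition dprob {R : realType} d (T : measurableType d) (mu : {measure set T -> \bar R})
  (g : T -> \bar R) (mg : measurable_fun setT g) (g0 : forall x, 0 <= g x)
  (g1 : \int[mu]_x g x = 1) : probability T R := dmeas mg g0 g1.
Lemma int_indic {R : realType} d (T : measurableType d) (mu : {measure set T -> \bar R})
  (A : set T) (f : T -> \bar R) :
  \int[mu]_x (f x * (\1_A x)%:E) = \int[mu]_(x in A) f x.
Proof. by rewrite [RHS]integral_mkcond epatch_indic. Qed.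

Section kern.
Context {R : realType} d (T : measurableType d) (mu : {sigma_finite_measure set T -> \bar R})
  (k : T -> T -> \bar R) (mk : measurable_fun setT (fun z : T * T => k z.1 z.2))
  (k0 : forall x y, 0 <= k x y).

Lemma kop_meas f : measurable_fun setT f -> (forall x, 0 <= f x) ->
  measurable_fun setT (kop mu k f).
Proof.
move=> mf f0; rewrite /kop.
apply: (meas_intF mu (fun x y => k x y * f y)).
- apply: emeasurable_funM => //; exact: measurableT_comp mf measurable_snd.
- by move=> x y; exact: mule_ge0.
Qed.

Lemma kop_ge0 f : (forall x, 0 <= f x) -> forall x, 0 <= kop mu k f x.
Proof. by move=> f0 x; apply: integral_ge0 => y _; exact: mule_ge0. Qed.

Lemma kop_indicE A x : kop mu k (fun y => (\1_A y)%:E) x = \int[mu]_(y in A) k x y.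
Proof. by rewrite /kop int_indic. Qed.

Variable P : probability T R.
Hypothesis Pinv : kinvariant mu k P.

Definition pid y := \int[P]_x k x y.

Lemma pid_meas : measurable_fun setT pid.
Proof. exact: (meas_intG P k). Qed.

Lemma pid_ge0 y : 0 <= pid y.
Proof. by apply: integral_ge0. Qed.

Lemma pidE A : measurable A -> P A = \int[mu]_(y in A) pid y.
Proof.
move=> mA; rewrite -Pinv// /mpow /kpow /=.
rewrite -[X in _ = X]int_indic /kop.
by rewrite (GA P mu k) // ; exact/measurable_EFinP/measurable_indic.
Qed.

Lemma P_kop f : measurable_fun setT f -> (forall x, 0 <= f x) ->
  \int[P]_x kop mu k f x = \int[P]_x f x.
Proof.
move=> mf f0; rewrite /kop (GA P mu k) //.
rewrite (DL P mu pid) //.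
- by apply: eq_integral => y _; rewrite muleC.
- exact: pid_meas.
- exact: pid_ge0.
- exact: pidE.
Qed.

End kern.
Lemma addeI_fin {R : realType} (a b c : \bar R) : a \is a fin_num -> a + b = a + c -> b = c.
Proof.
move=> fa /(congr1 (fun z => z - a)).
by rewrite ![a + _]addeC !addeK.
Qed.

Lemma lt_set_meas {R : realType} d (T : measurableType d) (f g : T -> \bar R) :
  measurable_fun setT f -> measurable_fun setT g -> measurable [set x | f x < g x].
Proof. by move=> mf mg; rewrite -[X in measurable X]setTI; exact: measurable_lte. Qed.

Section uniq.
Context {R : realType} d (T : measurableType d) (mu : {sigma_finite_measure set T -> \bar R})
  (k : T -> T -> \bar R) (mk : measurable_fun setT (fun z : T * T => k z.1 z.2))
  (k0 : forall x y, 0 <= k x y) (k1 : forall x, \int[mu]_y k x y = 1).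

Definition uB (B : set T) x := \int[mu]_(y in B) k x y.

Lemma uB_ge0 B x : 0 <= uB B x.
Proof. exact: integral_ge0. Qed.

Lemma uB_le1 B x : measurable B -> uB B x <= 1.
Proof.
move=> mB; rewrite -(k1 x) /uB; apply: ge0_subset_integral => //.
exact: measurableT_comp mk (pair1_measurable x).
Qed.

Lemma uB_fin B x : measurable B -> uB B x \is a fin_num.
Proof.
move=> mB; rewrite ge0_fin_numE ?uB_ge0//.
by apply: (@le_lt_trans _ _ 1); [exact: uB_le1|rewrite ltey].
Qed.

Lemma uB_meas B : measurable B -> measurable_fun setT (uB B).
Proof.
move=> mB; have -> : uB B = kop mu k (fun y => (\1_B y)%:E).
  by apply/funext => x; rewrite kop_indicE.
apply: kop_meas => //; exact/measurable_EFinP/measurable_indic.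
Qed.

Section pair.
Variables (p1 p2 : T -> \bar R).
Hypotheses (mp1 : measurable_fun setT p1) (mp2 : measurable_fun setT p2).
Hypotheses (p10 : forall x, 0 <= p1 x) (p20 : forall x, 0 <= p2 x).
Hypotheses (i1 : \int[mu]_x p1 x = 1) (i2 : \int[mu]_x p2 x = 1).
Hypothesis inv1 : forall B, measurable B ->
  \int[mu]_(y in B) p1 y = \int[mu]_x (p1 x * uB B x).
Hypothesis inv2 : forall B, measurable B ->
  \int[mu]_(y in B) p2 y = \int[mu]_x (p2 x * uB B x).

Let P := [set x | p2 x < p1 x].
Let mP : measurable P := lt_set_meas mp2 mp1.
Let mCP : measurable (~` P) := measurableC mP.
Let uP := uB P.
Let muP : measurable_fun setT uP := uB_meas mP.
Let q x := 1 - uP x.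
Let uPfin x : uP x \is a fin_num := uB_fin x mP.
Let q0 x : 0 <= q x.
Proof. by rewrite /q sube_ge0 ?uPfin//; exact: uB_le1. Qed.
Let uq x : uP x + q x = 1.
Proof. by rewrite /q addeC subeK. Qed.
Let mq : measurable_fun setT q.
Proof. by apply: emeasurable_funB => //; exact: measurable_cst. Qed.

Let int_le1 p : measurable_fun setT p -> (forall x, 0 <= p x) -> \int[mu]_x p x = 1 ->
  forall (A : set T) (g : T -> \bar R), measurable A -> measurable_fun setT g ->
  (forall x, 0 <= g x) -> (forall x, g x <= 1) ->
  \int[mu]_(x in A) (p x * g x) \is a fin_num.
Proof.
move=> mp p0 ip A g mA mg g0 g1.
rewrite ge0_fin_numE; last by apply: integral_ge0 => x _; exact: mule_ge0.
apply: (@le_lt_trans _ _ (\int[mu]_x p x)); last by rewrite ip ltey.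
apply: (@le_trans _ _ (\int[mu]_(x in A) p x)).
  apply: ge0_le_integral => //.
  - by move=> x _; exact: mule_ge0.
  - by apply: emeasurable_funM; exact: measurable_funS mp || exact: measurable_funS mg.
  - exact: measurable_funS mp.
  - by move=> x _; rewrite -{2}(mule1 (p x)); apply: lee_wpmul2l.
by apply: ge0_subset_integral.
Qed.

Let split_i p : measurable_fun setT p -> (forall x, 0 <= p x) -> \int[mu]_x p x = 1 ->
  (forall B, measurable B -> \int[mu]_(y in B) p y = \int[mu]_x (p x * uB B x)) ->
  \int[mu]_(x in P) (p x * q x) = \int[mu]_(x in ~` P) (p x * uP x).
Proof.
move=> mp p0 ip invp.
have mpu : measurable_fun setT (fun x => p x * uP x) by exact: emeasurable_funM.
have mpq : measurable_fun setT (fun x => p x * q x) by exact: emeasurable_funM.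
have e1 : \int[mu]_(x in P) p x =
    \int[mu]_(x in P) (p x * uP x) + \int[mu]_(x in P) (p x * q x).
  rewrite -ge0_integralD//.
  - by apply: eq_integral => x _; rewrite -ge0_muleDr ?uB_ge0// uq mule1.
  - by move=> x _; rewrite mule_ge0 ?uB_ge0.
  - exact: measurable_funS mpu.
  - by move=> x _; rewrite mule_ge0.
  - exact: measurable_funS mpq.
have e2 : \int[mu]_(x in P) p x =
    \int[mu]_(x in P) (p x * uP x) + \int[mu]_(x in ~` P) (p x * uP x).
  rewrite invp// -ge0_integral_setU//.
  - by rewrite setUv.
  - by rewrite setUv.
  - by move=> x _; rewrite mule_ge0 ?uB_ge0.
  - by apply/disj_setPCl.
apply: (@addeI_fin _ (\int[mu]_(x in P) (p x * uP x))).
  apply: (int_le1 mp p0 ip) => //; [exact: uB_ge0|move=> x; exact: uB_le1].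
by rewrite -e1 -e2.
Qed.


Let q1 x : q x <= 1.
Proof. by rewrite -[leRHS](uq x) leeDr// uB_ge0. Qed.

Lemma U12 : exists P' : set T, [/\ measurable P', P' `<=` P,
     mu.-negligible (P `\` P') &
     forall x, P' x -> forall n, avoid mu k (~` P') n x = 1].
Proof.
have s1 := split_i mp1 p10 i1 inv1.
have s2 := split_i mp2 p20 i2 inv2.
have mpq1 : measurable_fun setT (fun x => p1 x * q x) by exact: emeasurable_funM.
have mpq2 : measurable_fun setT (fun x => p2 x * q x) by exact: emeasurable_funM.
have mpu1 : measurable_fun setT (fun x => p1 x * uP x) by exact: emeasurable_funM.
have mpu2 : measurable_fun setT (fun x => p2 x * uP x) by exact: emeasurable_funM.
have le1 : \int[mu]_(x in P) (p2 x * q x) <= \int[mu]_(x in P) (p1 x * q x).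
  apply: ge0_le_integral => //.
  - by move=> x _; rewrite mule_ge0.
  - exact: measurable_funS mpq2.
  - exact: measurable_funS mpq1.
  - by move=> x Px; apply: lee_wpmul2r => //; exact: ltW.
have le2 : \int[mu]_(x in ~` P) (p1 x * uP x) <= \int[mu]_(x in ~` P) (p2 x * uP x).
  apply: ge0_le_integral => //.
  - by move=> x _; rewrite mule_ge0 ?uB_ge0.
  - exact: measurable_funS mpu1.
  - exact: measurable_funS mpu2.
  - move=> x nPx; apply: lee_wpmul2r; first exact: uB_ge0.
    by rewrite leNgt; apply/negP.
have eq : \int[mu]_(x in P) (p2 x * q x) = \int[mu]_(x in P) (p1 x * q x).
  by apply/eqP; rewrite eq_le le1 /= s1 s2.
have fin : \int[mu]_(x in P) (p2 x * q x) \is a fin_num.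
  by apply: (int_le1 mp2 p20 i2).
have := le_int_eq mu mP (fun x => p2 x * q x) (fun x => p1 x * q x) (measurable_funS measurableT (subsetT _) mpq2)
  (measurable_funS measurableT (subsetT _) mpq1).
move=> /(_ (fun x _ => mule_ge0 (p20 x) (q0 x))).
move=> /(_ (fun x Px => lee_wpmul2r (q0 x) (ltW Px)) fin eq).
move=> [N0 [mN0 N00 sN0]].
have uP1 x : (P `\` N0) x -> uP x = 1.
  move=> [Px nN0x]; apply/eqP; rewrite eq_le uB_le1//=.
  rewrite leNgt; apply/negP => ux1; apply: nN0x; apply: sN0; split => //=.
  rewrite lte_pmul2r//; first by rewrite fin_numB uPfin.
  by rewrite /q sube_gt0.
have mPN : measurable (P `\` N0) by exact: measurableD.
have PE : P = (P `\` N0) `|` (P `&` N0).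
  by apply/seteqP; split => y; [case: (pselect (N0 y)) => ? ?; [right|left]|move=> [[]|[]]].
have K1 x : (P `\` N0) x -> \int[mu]_(y in P `\` N0) k x y = 1.
  move=> PNx; rewrite -(uP1 x PNx) /uP /uB.
  have mkx : measurable_fun setT (k x) by exact: measurableT_comp mk (pair1_measurable x).
  rewrite [in RHS]PE ge0_integral_setU//.
  - rewrite [X in _ = _ + X]null_set_integral ?adde0//.
    + exact: measurableI.
    + exact: (measurable_funS measurableT (subsetT _) mkx).
    + by apply: (subset_measure0 _ _ _ N00) => //; exact: measurableI.
  - exact: measurableI.
  - exact: (measurable_funS measurableT (subsetT _) mkx).
  - by apply/disj_set2P; apply/seteqP; split => y // [[]] ? ? [].
exists (P `\` N0); split => //.
- exists N0; split => // x [Px nP'x]; apply: contrapT => nN0; exact: nP'x.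
move=> x Px n; elim: n x Px => [//|n IH] x Px /=.
rewrite setCK.
transitivity (kop mu k (fun y => (\1_(P `\` N0) y)%:E) x); last first.
  by rewrite kop_indicE; exact: K1.
rewrite /kop; apply: eq_integral => y _; congr (_ * _).
case: (pselect ((P `\` N0) y)) => H.
  by rewrite indicE mem_set// IH// mul1e.
by rewrite indicE memNset// mul0e.
Qed.

End pair.

Lemma half_ae p1 p2 : measurable_fun setT p1 -> measurable_fun setT p2 ->
  (forall x, 0 <= p1 x) -> (forall x, 0 <= p2 x) ->
  \int[mu]_x p1 x = 1 -> \int[mu]_x p2 x = 1 ->
  mu.-negligible [set x | p2 x < p1 x] -> ae_eq mu setT p1 p2.
Proof.
move=> mp1 mp2 p10 p20 i1 i2 Hn.
set P := [set x | p2 x < p1 x].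
have mP : measurable P := lt_set_meas mp2 mp1.
have P0 : mu P = 0 := measure_negligible mP Hn.
have intE p : measurable_fun setT p -> (forall x, 0 <= p x) -> \int[mu]_x p x = 1 ->
    \int[mu]_(x in ~` P) p x = 1.
  move=> mp p0 ip; rewrite -ip -[in RHS](setUv P) ge0_integral_setU//.
  - by rewrite null_set_integral ?add0e//; exact: (measurable_funS measurableT (subsetT _) mp).
  - exact: measurableC.
  - by rewrite setUv.
  - by apply/disj_setPCl.
have Hn2 := le_int_eq mu (measurableC mP) p1 p2
  (measurable_funS measurableT (subsetT _) mp1) (measurable_funS measurableT (subsetT _) mp2)
  (fun x _ => p10 x) (fun x nPx => ltac:(by rewrite leNgt; apply/negP))
  (ltac:(by rewrite intE)) (ltac:(by rewrite !intE)).
apply: (negligibleS _ (negligibleU Hn Hn2)) => x /= H.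
case: (pselect (P x)) => Px; [by left|right; split => //=].
rewrite lt_neqAle; apply/andP; split.
  by apply/eqP => e; apply: H => _.
by rewrite leNgt; apply/negP.
Qed.

Lemma uniq_inv (irr : psi_irreducible mu k) p1 p2 :
  measurable_fun setT p1 -> measurable_fun setT p2 ->
  (forall x, 0 <= p1 x) -> (forall x, 0 <= p2 x) ->
  \int[mu]_x p1 x = 1 -> \int[mu]_x p2 x = 1 ->
  (forall B, measurable B -> \int[mu]_(y in B) p1 y = \int[mu]_x (p1 x * uB B x)) ->
  (forall B, measurable B -> \int[mu]_(y in B) p2 y = \int[mu]_x (p2 x * uB B x)) ->
  ae_eq mu setT p1 p2.
Proof.
move=> mp1 mp2 p10 p20 i1 i2 inv1 inv2.
have [P' [mP' sP' nP' aP']] := U12 mp1 mp2 p10 p20 i1 i2 inv1 inv2.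
have [N' [mN' sN' nN' aN']] := U12 mp2 mp1 p20 p10 i2 i1 inv2 inv1.
have [psi [[psi0 psiA] _]] := irr.
have key (Q : set T) : measurable Q ->
    (forall x, Q x -> forall n, avoid mu k (~` Q) n x = 1) -> Q !=set0 -> psi (~` Q) = 0.
  move=> mQ aQ [x Qx]; apply/eqP; rewrite eq_le measure_ge0 andbT leNgt; apply/negP.
  move=> /(psiA _ (measurableC mQ)) /(_ x).
  have -> : hitL mu k (~` Q) x = 0.
    rewrite /hitL.
    have -> : [set 1 - avoid mu k (~` Q) n x | n in [set: nat]] = [set 0].
      apply/seteqP; split => [_ [n _ <-]|_ ->] /=; first by rewrite aQ// subee.
      by exists 0%N => //=; rewrite subee.
    exact: ereal_sup1.
  by rewrite ltxx.
case: (pselect (P' !=set0)) => [P'n|P'0]; last first.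
  apply: half_ae => //.
  have P'E : P' = set0 by apply/seteqP; split => // x Px; apply: P'0; exists x.
  by move: nP'; rewrite P'E setD0.
case: (pselect (N' !=set0)) => [N'n|N'0]; last first.
  apply/ae_eq_sym; apply: half_ae => //.
  have N'E : N' = set0 by apply/seteqP; split => // x Px; apply: N'0; exists x.
  by move: nN'; rewrite N'E setD0.
exfalso.
have TE : [set: T] = ~` P' `|` ~` N'.
  apply/seteqP; split => // x _.
  case: (pselect (P' x)) => Px; last by left.
  right => Nx; have := sP' x Px; have := sN' x Nx => /= a b.
  by have := lt_trans a b; rewrite ltxx.
move: psi0; rewrite TE => /lt_le_trans/(_ (measureU2 _ (measurableC mP') (measurableC mN'))).
have kP := key P' mP' aP' P'n; have kN := key N' mN' aN' N'n.
by move: kP kN => /= -> ->; rewrite adde0 ltxx.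
Qed.

End uniq.
Lemma CK {R : realType} d1 d2 (T1 : measurableType d1) (T2 : measurableType d2)
  (m1 : {sigma_finite_measure set T1 -> \bar R}) (m2 : {sigma_finite_measure set T2 -> \bar R})
  (a : T1 -> T2 -> R) (ma : measurable_fun setT (fun z : T1 * T2 => a z.1 z.2))
  (a0 : forall y x, (0 <= a y x)%R) (b : T2 -> R) (mb : measurable_fun setT b)
  (b0 : forall x, (0 <= b x)%R)
  (f : T1 -> \bar R) (mf : measurable_fun setT f) (f0 : forall y, 0 <= f y) :
  \int[m1]_y ((\int[m2]_x (a y x * b x)%:E) * f y) =
  \int[m2]_x ((b x)%:E * \int[m1]_y ((a y x)%:E * f y)).
Proof.
have mab : measurable_fun setT (fun z : T1 * T2 => (a z.1 z.2 * b z.2)%:E).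
  apply/measurable_EFinP; apply: measurable_funM => //.
  exact: measurableT_comp mb measurable_snd.
have mF : measurable_fun [set: T1 * T2]
    ((fun z : T1 * T2 => (a z.1 z.2 * b z.2)%:E * f z.1) : _ -> \bar R).
  by apply: emeasurable_funM => //; exact: measurableT_comp mf measurable_fst.
have F0 : forall z : T1 * T2, 0 <= (a z.1 z.2 * b z.2)%:E * f z.1.
  by move=> z; apply: mule_ge0 => //; rewrite lee_fin mulr_ge0.
transitivity (\int[m1]_y \int[m2]_x ((a y x * b x)%:E * f y)).
  apply: eq_integral => y _; rewrite ge0_integralZr//.
  - exact: measurableT_comp mab (pair1_measurable y).
  - by move=> x _; rewrite lee_fin mulr_ge0.
have := fubini_tonelli _ mF F0; rewrite /= => ->.
apply: eq_integral => x _.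
rewrite -ge0_integralZl_EFin//.
- by apply: eq_integral => y _; rewrite EFinM muleAC muleC.
- by move=> y _; apply: mule_ge0 => //; rewrite lee_fin.
- apply: emeasurable_funM => //; apply/measurable_EFinP.
  exact: measurableT_comp ma (pair2_measurable x).
Qed.
From mathcomp Require Import lra.

Lemma key_ineq {R : realType} (a a' b b' : \bar R) :
  a \is a fin_num -> a' \is a fin_num -> b \is a fin_num -> b' \is a fin_num ->
  b <= a -> a' <= b' -> `|(a + a') - (b + b')| <= (a + b') - (b + a').
Proof.
case: a => [a||]//; case: a' => [a'||]//; case: b => [b||]//; case: b' => [b'||]// _ _ _ _.
rewrite !lee_fin => ba ab /=; rewrite ler_norml; apply/andP; split; lra.
Qed.

Lemma key2 {R : realType} (a b c e : \bar R) :
  a \is a fin_num -> b \is a fin_num -> c \is a fin_num -> e \is a fin_num ->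
  (a + b) - (c + e) <= `|a - c| + `|e - b|.
Proof.
case: a => [a||]//; case: b => [b||]//; case: c => [c||]//; case: e => [e||]// _ _ _ _ /=.

rewrite lee_fin; have h1 := ler_norm (a - c); have h2 := ler_norm (b - e); rewrite (distrC e b); lra.
Qed.

Lemma sum_fin_sub {R : realType} n (x y : 'I_n -> \bar R) :
  (forall i, x i \is a fin_num) -> (forall i, y i \is a fin_num) ->
  \sum_(i < n) (x i - y i) = \sum_(i < n) x i - \sum_(i < n) y i.
Proof.
move=> fx fy; rewrite big_split /= sumeN//.
by move=> i j _ _; rewrite fin_num_adde_defl// fy.
Qed.
Section main.
Context (R : realType) (dX dY : measure_display) (X : measurableType dX) (Y : measurableType dY)
  (muX : {sigma_finite_measure set X -> \bar R}) (muY : {sigma_finite_measure set Y -> \bar R})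
  (s : X -> Y -> R) (h : Y -> X -> R)
  (s_ge0 : forall x g, (0 <= s x g)%R) (h_ge0 : forall g x, (0 <= h g x)%R)
  (s_meas : measurable_fun setT (fun z : X * Y => s z.1 z.2))
  (h_meas : measurable_fun setT (fun z : X * Y => h z.2 z.1))
  (s_pdf : forall g, \int[muX]_x (s x g)%:E = 1)
  (h_pdf : forall x, \int[muY]_g (h g x)%:E = 1).

Let kX := fun x x' => \int[muY]_g (s x' g * h g x)%:E.
Let kY := fun g g' => \int[muX]_x (h g' x * s x g)%:E.

Let hmYX : measurable_fun setT (fun z : Y * X => h z.1 z.2).
Proof. have := measurableT_comp h_meas (@measurable_swap _ _ Y X). by []. Qed.

Let mkX : measurable_fun setT (fun z : X * X => kX z.1 z.2).
Proof.
apply: (meas_intF muY (fun (z : X * X) g => (s z.2 g * h g z.1)%:E)) => //.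
apply/measurable_EFinP; apply: measurable_funM.
- by have := measurableT_comp s_meas
    (measurable_fun_pair (measurableT_comp measurable_snd measurable_fst) measurable_snd).
- by have := measurableT_comp h_meas
    (measurable_fun_pair (measurableT_comp measurable_fst measurable_fst) measurable_snd).
- by move=> x y; rewrite lee_fin mulr_ge0.
Qed.

Let mkY : measurable_fun setT (fun z : Y * Y => kY z.1 z.2).
Proof.
apply: (meas_intF muX (fun (z : Y * Y) x => (h z.2 x * s x z.1)%:E)) => //.
apply/measurable_EFinP; apply: measurable_funM.
- by have := measurableT_comp hmYX
    (measurable_fun_pair (measurableT_comp measurable_snd measurable_fst) measurable_snd).
- by have := measurableT_comp s_meas
    (measurable_fun_pair measurable_snd (measurableT_comp measurable_fst measurable_fst)).
- by move=> x y; rewrite lee_fin mulr_ge0.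
Qed.

Let kX0 x y : 0 <= kX x y.
Proof. by apply: integral_ge0 => g _; rewrite lee_fin mulr_ge0. Qed.

Let kY0 x y : 0 <= kY x y.
Proof. by apply: integral_ge0 => g _; rewrite lee_fin mulr_ge0. Qed.

Let SX (f : X -> \bar R) g := \int[muX]_x ((s x g)%:E * f x).
Let HY (u : Y -> \bar R) x := \int[muY]_g ((h g x)%:E * u g).

Let SX_meas f : measurable_fun setT f -> (forall x, 0 <= f x) -> measurable_fun setT (SX f).
Proof.
move=> mf f0; apply: (meas_intG muX (fun x g => (s x g)%:E * f x)).
- apply: emeasurable_funM; first exact/measurable_EFinP.
  exact: measurableT_comp mf measurable_fst.
- by move=> x g; apply: mule_ge0 => //; rewrite lee_fin.
Qed.

Let SX_ge0 f : (forall x, 0 <= f x) -> forall g, 0 <= SX f g.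
Proof. by move=> f0 g; apply: integral_ge0 => x _; apply: mule_ge0 => //; rewrite lee_fin. Qed.

Let HY_meas u : measurable_fun setT u -> (forall x, 0 <= u x) -> measurable_fun setT (HY u).
Proof.
move=> mu u0; apply: (meas_intG muY (fun g x => (h g x)%:E * u g)).
- apply: emeasurable_funM; first exact/measurable_EFinP.
  exact: measurableT_comp mu measurable_fst.
- by move=> g x; apply: mule_ge0 => //; rewrite lee_fin.
Qed.

Let HY_ge0 u : (forall x, 0 <= u x) -> forall x, 0 <= HY u x.
Proof. by move=> u0 x; apply: integral_ge0 => g _; apply: mule_ge0 => //; rewrite lee_fin. Qed.

Let kopX_E f : measurable_fun setT f -> (forall x, 0 <= f x) ->
  kop muX kX f = HY (SX f).
Proof.
move=> mf f0; apply/funext => x; rewrite /kop /kX /HY /SX.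
exact: (CK muX muY (a := fun y g => s y g) s_meas s_ge0 (b := fun g => h g x)
  (measurableT_comp h_meas (pair1_measurable x)) (fun g => h_ge0 g x) mf f0).
Qed.

Let kopY_E u : measurable_fun setT u -> (forall x, 0 <= u x) ->
  kop muY kY u = SX (HY u).
Proof.
move=> mu u0; apply/funext => g; rewrite /kop /kY /HY /SX.
exact: (CK muY muX (a := fun g' x => h g' x) hmYX h_ge0 (b := fun x => s x g)
  (measurableT_comp s_meas (pair2_measurable g)) (fun x => s_ge0 x g) mu u0).
Qed.

Let kY1 g : \int[muY]_g' kY g g' = 1.
Proof.
transitivity (\int[muY]_g' (kY g g' * 1)).
  by apply: eq_integral => g' _; rewrite mule1.
rewrite /kY (CK muY muX (a := fun g' x => h g' x) hmYX h_ge0 (b := fun x => s x g)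
  (measurableT_comp s_meas (pair2_measurable g)) (fun x => s_ge0 x g)
  (measurable_cst (1 : \bar R)) (fun _ => lee01)).
transitivity (\int[muX]_x (s x g)%:E); last exact: s_pdf.
apply: eq_integral => x _.
transitivity ((s x g)%:E * \int[muY]_y (h y x)%:E).
  by congr (_ * _); apply: eq_integral => y _; rewrite mule1.
by rewrite h_pdf mule1.
Qed.

Let kopX_meas n f : measurable_fun setT f -> (forall x, 0 <= f x) ->
  measurable_fun setT (iter n (kop muX kX) f) /\ forall x, 0 <= iter n (kop muX kX) f x.
Proof.
move=> mf f0; elim: n => [//|n [IHm IH0]] /=; split.
- exact: kop_meas.
- exact: kop_ge0.
Qed.

Let kopY_meas n f : measurable_fun setT f -> (forall x, 0 <= f x) ->
  measurable_fun setT (iter n (kop muY kY) f) /\ forall x, 0 <= iter n (kop muY kY) f x.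
Proof.
move=> mf f0; elim: n => [//|n [IHm IH0]] /=; split.
- exact: kop_meas.
- exact: kop_ge0.
Qed.

Let SX_iter n f : measurable_fun setT f -> (forall x, 0 <= f x) ->
  SX (iter n (kop muX kX) f) = iter n (kop muY kY) (SX f).
Proof.
move=> mf f0; elim: n => [//|n IH] /=.
have [m0 p0] := kopX_meas n mf f0.
have mS : measurable_fun setT (SX (iter n (kop muX kX) f)) by apply: SX_meas.
have S0 : forall g, 0 <= SX (iter n (kop muX kX) f) g by apply: SX_ge0.
by rewrite kopX_E// -kopY_E// IH.
Qed.

Let ind (T : Type) (A : set T) := fun y => ((\1_A y)%:E : \bar R).

Let mind d (T : measurableType d) (A : set T) : measurable A -> measurable_fun setT (ind A).
Proof. by move=> mA; apply/measurable_EFinP; exact: measurable_indic. Qed.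

Let ind0 (T : Type) (A : set T) x : 0 <= ind A x.
Proof. by rewrite /ind lee_fin. Qed.

Let kpowX_S j x A : measurable A ->
  kpow muX kX j.+1 x A = HY (iter j (kop muY kY) (SX (ind A))) x.
Proof.
move=> mA; rewrite /kpow /=.
have [m0 p0] := kopX_meas j (mind mA) (@ind0 _ A).
rewrite kopX_E // SX_iter //; exact: mind.
Qed.

Let tau (nu : probability X R) g := \int[nu]_x (h g x)%:E.

Let mhXY : measurable_fun setT (fun z : X * Y => (h z.2 z.1)%:E).
Proof. exact/measurable_EFinP. Qed.

Let tau_meas nu : measurable_fun setT (tau nu).
Proof. by apply: (meas_intG nu (fun x g => (h g x)%:E)) => // x g; rewrite lee_fin. Qed.

Let tau_ge0 nu g : 0 <= tau nu g.
Proof. by apply: integral_ge0 => x _; rewrite lee_fin. Qed.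

Let nuHY (nu : probability X R) F : measurable_fun setT F -> (forall g, 0 <= F g) ->
  \int[nu]_x HY F x = \int[muY]_g (tau nu g * F g).
Proof.
move=> mF F0; rewrite /HY.
by apply: (GA nu muY (fun x g => (h g x)%:E)) => // x g; rewrite lee_fin.
Qed.

Let tau1 nu : \int[muY]_g tau nu g = 1.
Proof.
transitivity (\int[muY]_g (tau nu g * 1)).
  by apply: eq_integral => g _; rewrite mule1.
rewrite -nuHY//.
transitivity (\int[nu]_x (cst 1 x : \bar R)).
  apply: eq_integral => x _; rewrite /HY -[RHS](h_pdf x).
  by apply: eq_integral => g _; rewrite mule1.
by rewrite integral_cst// mul1e; exact: probability_setT.
Qed.

Let mpowX_S (nu : probability X R) j A : measurable A ->
  mpow muX kX nu j.+1 A = \int[muY]_g (tau nu g * iter j (kop muY kY) (SX (ind A)) g).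
Proof.
move=> mA; rewrite /mpow.
have mS : measurable_fun setT (SX (ind A)) by apply: SX_meas => //; exact: mind.
have S0 : forall g, 0 <= SX (ind A) g by apply: SX_ge0.
have [m0 p0] := kopY_meas j mS S0.
rewrite -nuHY//; apply: eq_integral => x _; exact: kpowX_S.
Qed.

Let TY (p : Y -> \bar R) g' := \int[muY]_g (p g * kY g g').

Let TY_mg p : measurable_fun setT p -> (forall g, 0 <= p g) ->
  measurable_fun setT (TY p) /\ forall g, 0 <= TY p g.
Proof.
move=> mp p0; split.
  apply: (meas_intG muY (fun g g' => p g * kY g g')).
  - apply: emeasurable_funM => //; exact: measurableT_comp mp measurable_fst.
  - by move=> g g'; exact: mule_ge0.
by move=> g; apply: integral_ge0 => g' _; exact: mule_ge0.
Qed.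

Let int_kopY p v : measurable_fun setT p -> (forall g, 0 <= p g) ->
  measurable_fun setT v -> (forall g, 0 <= v g) ->
  \int[muY]_g (p g * kop muY kY v g) = \int[muY]_g' (TY p g' * v g').
Proof.
move=> mp p0 mv v0; rewrite /kop.
transitivity (\int[muY]_g \int[muY]_g' (p g * kY g g' * v g')).
  apply: eq_integral => g _; rewrite -ge0_integralZl//.
  - by apply: eq_integral => g' _; rewrite muleA.
  - apply: emeasurable_funM => //.
    exact: measurableT_comp mkY (pair1_measurable g).
  - by move=> g' _; exact: mule_ge0.
apply: (GA muY muY (fun g g' => p g * kY g g')) => //.
- apply: emeasurable_funM => //; exact: measurableT_comp mp measurable_fst.
- by move=> g g'; exact: mule_ge0.
Qed.

Let int_iterY n p v : measurable_fun setT p -> (forall g, 0 <= p g) ->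
  measurable_fun setT v -> (forall g, 0 <= v g) ->
  \int[muY]_g (p g * iter n (kop muY kY) v g) = \int[muY]_g (iter n TY p g * v g).
Proof.
move=> mp p0 mv v0; elim: n p mp p0 => [//|n IH] p mp p0 /=.
have [m1 q1] := kopY_meas n mv v0.
have [m2 q2] := TY_mg mp p0.
rewrite int_kopY// IH//.
by rewrite -iterSr.
Qed.

Let kopY1 : kop muY kY (fun _ => 1) = (fun _ => 1).
Proof.
apply/funext => g; rewrite /kop -[RHS](kY1 g).
by apply: eq_integral => g' _; rewrite mule1.
Qed.

Let iterY1 n : iter n (kop muY kY) (fun _ => 1) = (fun _ => 1).
Proof. by elim: n => [//|n IH] /=; rewrite IH kopY1. Qed.

Let dens_int n p : measurable_fun setT p -> (forall g, 0 <= p g) ->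
  \int[muY]_g iter n TY p g = \int[muY]_g p g.
Proof.
move=> mp p0.
transitivity (\int[muY]_g (iter n TY p g * 1)).
  by apply: eq_integral => g _; rewrite mule1.
rewrite -int_iterY//.
by rewrite iterY1; apply: eq_integral => g _; rewrite mule1.
Qed.

Let dens_mg n p : measurable_fun setT p -> (forall g, 0 <= p g) ->
  measurable_fun setT (iter n TY p) /\ forall g, 0 <= iter n TY p g.
Proof.
move=> mp p0; elim: n => [//|n [IHm IH0]] /=.
exact: TY_mg.
Qed.

Let mpowY_dens (p : Y -> \bar R) (mp : measurable_fun setT p) (p0 : forall g, 0 <= p g)
  (p1 : \int[muY]_g p g = 1) j B : measurable B ->
  mpow muY kY (dprob mp p0 p1) j B = \int[muY]_(g in B) iter j TY p g.
Proof.
move=> mB; rewrite /mpow /kpow.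
have [m0 q0] := kopY_meas j (mind mB) (@ind0 _ B).
rewrite (DL (dprob mp p0 p1) muY p mp p0) //.
- rewrite -[X in _ = X]int_indic.
  transitivity (\int[muY]_g (p g * iter j (kop muY kY) (ind B) g)).
    by apply: eq_integral => g _; rewrite muleC.
  by rewrite int_iterY//; exact: mind.

Qed.

Variables (Pi : probability X R) (tPi : probability Y R).
Hypothesis Pi_inv : kinvariant muX kX Pi.
Hypothesis tPi_inv : kinvariant muY kY tPi.
Hypothesis irrY : psi_irreducible muY kY.

Let tpi := pid kY tPi.

Let tpi_meas : measurable_fun setT tpi.
Proof. exact: pid_meas. Qed.

Let tpi_ge0 g : 0 <= tpi g.
Proof. exact: pid_ge0. Qed.

Let tpiE B : measurable B -> tPi B = \int[muY]_(g in B) tpi g.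
Proof. exact: pidE. Qed.

Let tpi1 : \int[muY]_g tpi g = 1.
Proof. by rewrite -tpiE// probability_setT. Qed.

Let PiE A : measurable A -> Pi A = \int[muY]_g (tau Pi g * SX (ind A) g).
Proof. by move=> mA; rewrite -Pi_inv// mpowX_S. Qed.

Let uBE B g : measurable B -> uB muY kY B g = kop muY kY (ind B) g.
Proof. by move=> mB; rewrite kop_indicE. Qed.

Let tauPi_inv B : measurable B ->
  \int[muY]_(y in B) tau Pi y = \int[muY]_g (tau Pi g * uB muY kY B g).
Proof.
move=> mB.
have mH : measurable_fun setT (HY (ind B)) by apply: HY_meas => //; exact: mind.
have H0 : forall x, 0 <= HY (ind B) x by apply: HY_ge0.
have mSH : measurable_fun setT (SX (HY (ind B))) by exact: SX_meas.
have SH0 : forall g, 0 <= SX (HY (ind B)) g by exact: SX_ge0.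
transitivity (\int[muY]_g (tau Pi g * SX (HY (ind B)) g)); last first.
  apply: eq_integral => g _; rewrite uBE// kopY_E//; exact: mind.
rewrite -nuHY//.
rewrite -kopX_E// (P_kop mkX kX0 Pi_inv)// nuHY//; last exact: mind.
by rewrite -[X in X = _]int_indic; apply: eq_integral => g _; rewrite muleC.
Qed.

Let tpi_inv B : measurable B ->
  \int[muY]_(y in B) tpi y = \int[muY]_g (tpi g * uB muY kY B g).
Proof.
move=> mB.
have [m0 q0] := kopY_meas 1 (mind mB) (@ind0 _ B).
transitivity (\int[muY]_g (kop muY kY (ind B) g * tpi g)); last first.
  by apply: eq_integral => g _; rewrite uBE// muleC.
rewrite -(DL tPi muY tpi tpi_meas tpi_ge0)//.
by rewrite -tpiE// -tPi_inv.
Qed.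

Let tau_tpi : ae_eq muY setT (tau Pi) tpi.
Proof.
apply: (uniq_inv mkY kY0 kY1 irrY);
  solve [done|exact: tau_meas|exact: tau_ge0|exact: tau1|exact: tauPi_inv|exact: tpi_inv].
Qed.

Let PiE2 A : measurable A -> Pi A = \int[muY]_g (tpi g * SX (ind A) g).
Proof.
move=> mA; rewrite PiE//.
have mS : measurable_fun setT (SX (ind A)) by apply: SX_meas => //; exact: mind.
transitivity (\int[muY]_g (SX (ind A) g * tau Pi g)).
  by apply: eq_integral => g _; rewrite muleC.
transitivity (\int[muY]_g (SX (ind A) g * tpi g)); last first.
  by apply: eq_integral => g _; rewrite muleC.
apply: ae_eq_integral => //.
- by apply: emeasurable_funM => //; exact: tau_meas.
- exact: emeasurable_funM.
- exact: ae_eqe_mul2l.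
Qed.

Variables (Rb : Y -> nat -> R).
Hypothesis Rb_gt0 : forall g m, (0 < Rb g m)%R.
Hypothesis Rb_meas : forall m, measurable_fun setT (fun g => Rb g m).
Hypothesis hyp : forall (tnu : probability Y R) (m : nat),
  tvd (mpow muY kY tnu m) tPi <= \int[tnu]_g (Rb g m)%:E.

Let S (A : set X) := SX (ind A).

Let S_meas A : measurable A -> measurable_fun setT (S A).
Proof. by move=> mA; apply: SX_meas => //; exact: mind. Qed.

Let S_ge0 A g : 0 <= S A g.
Proof. exact: SX_ge0. Qed.

Let mshg g : measurable_fun setT (fun x => (s x g)%:E).
Proof. by apply/measurable_EFinP; exact: measurableT_comp s_meas (pair2_measurable g). Qed.

Let S_le1 A g : measurable A -> S A g <= 1.
Proof.
move=> mA; rewrite -(s_pdf g); apply: ge0_le_integral => //.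
- by move=> x _; apply: mule_ge0 => //; rewrite lee_fin.
- by apply: emeasurable_funM => //; exact: mind.
- move=> x _; rewrite -[leRHS]mule1; apply: lee_wpmul2l; first by rewrite lee_fin.
  by rewrite /ind lee_fin indicE; case: (_ \in _).
Qed.

Let part_sum n (A : 'I_n -> set X) (tA : trivIset setT A)
  (UA : \bigcup_(i in setT) A i = setT) x : \sum_(i < n) ind (A i) x = 1.
Proof.
have : (\bigcup_(i in setT) A i) x by rewrite UA.
case=> i _ Aix.
rewrite (bigD1 i) //= big1 ?adde0.
- by rewrite /ind indicE mem_set.
- move=> j ji; rewrite /ind indicE memNset// => Ajx.
  have := tA j i I I (ex_intro _ x (conj Ajx Aix)).
  by move/eqP: ji.
Qed.

Let S_sum n (A : 'I_n -> set X) (mA : forall i, measurable (A i)) (tA : trivIset setT A)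
  (UA : \bigcup_(i in setT) A i = setT) g : \sum_(i < n) S (A i) g = 1.
Proof.
rewrite /S /SX -ge0_integral_sum//.
- rewrite -(s_pdf g); apply: eq_integral => x _.
  rewrite -ge0_sume_distrr; last by move=> i _; exact: ind0.
  by rewrite part_sum// mule1.
- by move=> i; apply: emeasurable_funM => //; exact: mind.
- by move=> i x _; apply: mule_ge0 => //; rewrite lee_fin.
Qed.

Let int_sum n (A : 'I_n -> set X) (mA : forall i, measurable (A i)) (tA : trivIset setT A)
  (UA : \bigcup_(i in setT) A i = setT) (F : Y -> \bar R) (mF : measurable_fun setT F)
  (F0 : forall g, 0 <= F g) (E : set Y) (mE : measurable E) :
  \sum_(i < n) \int[muY]_(g in E) (F g * S (A i) g) = \int[muY]_(g in E) F g.
Proof.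
rewrite -ge0_integral_sum//.
- apply: eq_integral => g _.
  by rewrite -ge0_sume_distrr ?S_sum ?mule1// => i _; exact: S_ge0.
- move=> i; apply: emeasurable_funM; first exact: (measurable_funS measurableT (subsetT _) mF).
  exact: (measurable_funS measurableT (subsetT _) (S_meas (mA i))).
- by move=> i g _; exact: mule_ge0.
Qed.

Let fin_sub (F : Y -> \bar R) (mF : measurable_fun setT F) (F0 : forall g, 0 <= F g)
  (F1 : \int[muY]_g F g = 1) (E : set Y) (mE : measurable E) :
  \int[muY]_(g in E) F g \is a fin_num.
Proof.
rewrite ge0_fin_numE; last exact: integral_ge0.
apply: (@le_lt_trans _ _ 1); last by rewrite ltey.
rewrite -F1; exact: ge0_subset_integral.
Qed.

Let fin_S (F : Y -> \bar R) (mF : measurable_fun setT F) (F0 : forall g, 0 <= F g)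
  (F1 : \int[muY]_g F g = 1) (E : set Y) (mE : measurable E) A (mA : measurable A) :
  \int[muY]_(g in E) (F g * S A g) \is a fin_num.
Proof.
rewrite ge0_fin_numE; last by apply: integral_ge0 => g _; exact: mule_ge0.
apply: (@le_lt_trans _ _ 1); last by rewrite ltey.
rewrite -F1; apply: (@le_trans _ _ (\int[muY]_(g in E) F g)); last exact: ge0_subset_integral.
apply: ge0_le_integral => //.
- by move=> g _; exact: mule_ge0.
- apply: emeasurable_funM; first exact: (measurable_funS measurableT (subsetT _) mF).
  exact: (measurable_funS measurableT (subsetT _) (S_meas mA)).
- exact: (measurable_funS measurableT (subsetT _) mF).
- by move=> g _; rewrite -[leRHS]mule1; apply: lee_wpmul2l => //; exact: S_le1.
Qed.

Let splitQ (Q : set Y) (mQ : measurable Q) (F : Y -> \bar R) (mF : measurable_fun setT F)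
  (F0 : forall g, 0 <= F g) A (mA : measurable A) :
  \int[muY]_g (F g * S A g) =
  \int[muY]_(g in Q) (F g * S A g) + \int[muY]_(g in ~` Q) (F g * S A g).
Proof.
rewrite -ge0_integral_setU//.
- by rewrite setUv.
- exact: measurableC.
- by rewrite setUv; apply: emeasurable_funM => //; exact: S_meas.
- by move=> g _; exact: mule_ge0.
- by apply/disj_setPCl.
Qed.

Lemma main_ineq (nu : probability X R) j :
  tvd (mpow muX kX nu j.+1) Pi <= \int[nu]_x (\int[muY]_g (Rb g j * h g x)%:E).
Proof.
pose p := tau nu.
pose tnu := dprob (tau_meas nu) (tau_ge0 nu) (tau1 nu).
pose D := iter j TY p.
have [mD D0] := dens_mg j (tau_meas nu) (tau_ge0 nu).
have D1 : \int[muY]_g D g = 1.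
  by rewrite /D dens_int; [exact: tau1|exact: tau_meas|exact: tau_ge0].
have mRb : measurable_fun setT (fun g => (Rb g j)%:E) by exact/measurable_EFinP.
have Rb0 : forall g, 0 <= (Rb g j)%:E by move=> g; rewrite lee_fin ltW.
have -> : \int[nu]_x \int[muY]_g (Rb g j * h g x)%:E = \int[tnu]_g (Rb g j)%:E.
  rewrite (DL tnu muY p (tau_meas nu) (tau_ge0 nu)) //.
  transitivity (\int[nu]_x HY (fun g => (Rb g j)%:E) x).
    by apply: eq_integral => x _; apply: eq_integral => g _; rewrite EFinM muleC.
  by rewrite nuHY//; apply: eq_integral => g _; exact: muleC.
apply: le_trans (hyp tnu j).
rewrite {1}/tvd; apply: ge_ereal_sup => _ [n [A [mA tA UA ->]]].
set Q := [set g | tpi g < D g].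
have mQ : measurable Q := lt_set_meas tpi_meas mD.
have mCQ := measurableC mQ.
set MQ := \int[muY]_(g in Q) D g.
set MN := \int[muY]_(g in ~` Q) D g.
set TQ := \int[muY]_(g in Q) tpi g.
set TN := \int[muY]_(g in ~` Q) tpi g.
apply: (@le_trans _ _ (`|MQ - TQ| + `|MN - TN|)); last first.
  apply: ereal_sup_ubound => /=.
  exists 2%N, (fun i : 'I_2 => if val i == 0%N then Q else ~` Q); split.
  - by case=> -[|[|]]//.
  - move=> i i' _ _ [x [Bi Bi']]; apply: val_inj; move: Bi Bi'.
    case: i => -[|[|?]] //= ?; case: i' => -[|[|?]] //= ?;
      try by move=> a b; exfalso; first [exact: b a|exact: a b].
  - apply/seteqP; split => // x _; case: (pselect (Q x)) => Qx.
    + by exists (Ordinal (isT : (0 < 2)%N)).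
    + by exists (Ordinal (isT : (1 < 2)%N)).
  - rewrite !big_ord_recl big_ord0 adde0 /=.
    by rewrite !mpowY_dens// !tpiE.
have eX i : mpow muX kX nu j.+1 (A i) = \int[muY]_g (D g * S (A i) g).
  rewrite mpowX_S// int_iterY//; [exact: S_meas|exact: S_ge0].
have eP i : Pi (A i) = \int[muY]_g (tpi g * S (A i) g) by exact: PiE2.
pose a i := \int[muY]_(g in Q) (D g * S (A i) g).
pose a' i := \int[muY]_(g in ~` Q) (D g * S (A i) g).
pose b i := \int[muY]_(g in Q) (tpi g * S (A i) g).
pose b' i := \int[muY]_(g in ~` Q) (tpi g * S (A i) g).
have fa i : a i \is a fin_num by exact: fin_S.
have fa' i : a' i \is a fin_num by exact: fin_S.
have fb i : b i \is a fin_num by exact: fin_S.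
have fb' i : b' i \is a fin_num by exact: fin_S.
apply: (@le_trans _ _ (\sum_(i < n) ((a i + b' i) - (b i + a' i)))).
  apply: lee_sum => i _.
  rewrite eX eP (splitQ mQ mD D0 (mA i)) (splitQ mQ tpi_meas tpi_ge0 (mA i)).
  apply: key_ineq; [exact: fa|exact: fa'|exact: fb|exact: fb'| |].
  - apply: ge0_le_integral => //.
    + by move=> g _; exact: mule_ge0.
    + apply: emeasurable_funM; first exact: (measurable_funS measurableT (subsetT _) tpi_meas).
      exact: (measurable_funS measurableT (subsetT _) (S_meas (mA i))).
    + apply: emeasurable_funM; first exact: (measurable_funS measurableT (subsetT _) mD).
      exact: (measurable_funS measurableT (subsetT _) (S_meas (mA i))).
    + by move=> g Qg; apply: lee_wpmul2r; [exact: S_ge0|exact: ltW].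
  - apply: ge0_le_integral => //.
    + by move=> g _; exact: mule_ge0.
    + apply: emeasurable_funM; first exact: (measurable_funS measurableT (subsetT _) mD).
      exact: (measurable_funS measurableT (subsetT _) (S_meas (mA i))).
    + apply: emeasurable_funM; first exact: (measurable_funS measurableT (subsetT _) tpi_meas).
      exact: (measurable_funS measurableT (subsetT _) (S_meas (mA i))).
    + move=> g nQg; apply: lee_wpmul2r; first exact: S_ge0.
      by rewrite leNgt; apply/negP.
rewrite sum_fin_sub; last 2 first.
  by move=> i; rewrite fin_numD fa fb'.
  by move=> i; rewrite fin_numD fb fa'.
have hA : \sum_(i < n) a i = MQ := int_sum mA tA UA mD D0 mQ.
have hA' : \sum_(i < n) a' i = MN := int_sum mA tA UA mD D0 mCQ.
have hB : \sum_(i < n) b i = TQ := int_sum mA tA UA tpi_meas tpi_ge0 mQ.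
have hB' : \sum_(i < n) b' i = TN := int_sum mA tA UA tpi_meas tpi_ge0 mCQ.
have e1 : \sum_(i < n) (a i + b' i) = MQ + TN by rewrite big_split hA hB'.
have e2 : \sum_(i < n) (b i + a' i) = TQ + MN by rewrite big_split hB hA'.
rewrite e1 e2.
by apply: key2; exact: fin_sub.
Qed.

End main.

Unset Implicit Arguments. Set Strict Implicit.

Theorem proposition14 (R : realType)
  (dX dY : measure_display) (X : measurableType dX) (Y : measurableType dY)
  (muX : {sigma_finite_measure set X -> \bar R})
  (muY : {sigma_finite_measure set Y -> \bar R})
  (s : X -> Y -> R) (* s x g = s~(x | g) *)
  (h : Y -> X -> R) (* h g x = h~(g | x) *)
  (s_ge0 : forall x g, (0 <= s x g)%R)
  (h_ge0 : forall g x, (0 <= h g x)%R)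
  (s_meas : measurable_fun setT (fun z : X * Y => s z.1 z.2))
  (h_meas : measurable_fun setT (fun z : X * Y => h z.2 z.1))
  (s_pdf : forall g, \int[muX]_x (s x g)%:E = 1)
  (h_pdf : forall x, \int[muY]_g (h g x)%:E = 1)
  (Pi : probability X R) (tPi : probability Y R)
  (Pi_inv : kinvariant muX (fun x x' => \int[muY]_g (s x' g * h g x)%:E) Pi)
  (tPi_inv : kinvariant muY (fun g g' => \int[muX]_x (h g' x * s x g)%:E) tPi)
  (HX : harris_ergodic muX (fun x x' => \int[muY]_g (s x' g * h g x)%:E))
  (HY : harris_ergodic muY (fun g g' => \int[muX]_x (h g' x * s x g)%:E))
  (Rb : Y -> nat -> R)
  (Rb_gt0 : forall g m, (0 < Rb g m)%R)
  (Rb_meas : forall m, measurable_fun setT (fun g => Rb g m))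
  (hyp : forall (tnu : probability Y R) (m : nat),
     tvd (mpow muY (fun g g' => \int[muX]_x (h g' x * s x g)%:E) tnu m) tPi
       <= \int[tnu]_g (Rb g m)%:E) :
  forall (nu : probability X R) (m : nat), (1 <= m)%N ->
    tvd (mpow muX (fun x x' => \int[muY]_g (s x' g * h g x)%:E) nu m) Pi
      <= \int[nu]_x (\int[muY]_g (Rb g m.-1 * h g x)%:E).

Proof.
move=> nu m m1; case: m m1 => [//|j] _ /=.
have [irrY _ _] := HY.
apply: main_ineq; try eassumption.
Qed.
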